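(* For $0<x<\frac12$, $$\zeta''\left(0,x+\tfrac12\right)+\zeta''\left(0,\tfrac12-x\right)=\zeta''(0,2x)+\zeta''(0,1-2x)-[\zeta''(0,x)+\zeta''(0,1-x)]-2\log 2\,\log(2\sin 2\pi x).$$
   Context: For $x>0$ let $\zeta(s,x)=\sum_{n=0}^{\infty}(n+x)^{-s}$ ($\operatorname{Re}s>1$) be the Hurwitz zeta function, analytically continued to $\mathbb{C}\setminus\{1\}$, and let $\zeta''(0,x)=\frac{\partial^2}{\partial s^2}\zeta(s,x)\big|_{s=0}$. *)

(* Defs.v *)
From Stdlib Require Import Reals.
From Coquelicot Require Import Coquelicot.
Open Scope R_scope.

(* Periodic second Bernoulli function  B2({t}) = {t}^2 - {t} + 1/6,
   where {t} = t - floor t  (Int_part t = floor t). *)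
Definition B2per (t : R) : R :=
  let u := t - IZR (Int_part t) in u * u - u + 1 / 6.

(* Hurwitz zeta function zeta(s,x), x > 0, for real s > -1, s <> 1,
   given by the (second order) Euler-Maclaurin formula
     zeta(s,x) = x^(1-s)/(s-1) + x^(-s)/2 + s x^(-s-1)/12
                 - s(s+1)/2 * int_0^oo B2({t}) (t+x)^(-s-2) dt,
   which equals sum_{n>=0} (n+x)^(-s) for s > 1 and is the (restriction to
   real s of the) analytic continuation on Re s > -1. *)
Definition hurwitz_zeta (s x : R) : R :=
  Rpower x (1 - s) / (s - 1) + Rpower x (- s) / 2 + s * Rpower x (- s - 1) / 12
  - s * (s + 1) / 2 *
    RInt_gen (fun t => B2per t * Rpower (t + x) (- s - 2))
             (at_point 0) (Rbar_locally p_infty).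

Definition hurwitz_zeta2_at0 (x : R) : R :=
  Derive_n (fun s => hurwitz_zeta s x) 2 0.

(* Main.v *)
Require Import Defs.
From Stdlib Require Import Reals.
From Coquelicot Require Import Coquelicot.
From Stdlib Require Import Lra Lia Psatz FunctionalExtensionality.
Open Scope R_scope.

Lemma B2per_on (n : Z) t : IZR n <= t < IZR n + 1 ->
  B2per t = (t - IZR n)^2 - (t - IZR n) + 1/6.
Proof.
  intros H. unfold B2per; cbv zeta.
  rewrite <- (Int_part_spec t n) by lra. ring.
Qed.

Lemma B2per_bound t : Rabs (B2per t) <= 1/6.
Proof.
  destruct (base_Int_part t) as [H1 H2].
  rewrite (B2per_on (Int_part t) t) by lra.
  set (u := t - IZR (Int_part t)).
  assert (0 <= u < 1) by (unfold u; lra).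
  apply Rabs_le; split; nra.
Qed.

Lemma B2per_periodic t : B2per (t + 1) = B2per t.
Proof.
  destruct (base_Int_part t) as [H1 H2].
  rewrite (B2per_on (Int_part t) t) by lra.
  rewrite (B2per_on (Int_part t + 1) (t+1)) by (rewrite plus_IZR; lra).
  rewrite plus_IZR. ring.
Qed.

Lemma B2per_01 t : 0 <= t <= 1 -> B2per t = t^2 - t + 1/6.
Proof.
  intros H. destruct (Req_dec t 1) as [->|Hn].
  - rewrite (B2per_on 1 1) by lra. ring.
  - rewrite (B2per_on 0 t) by lra. ring.
Qed.

Lemma B2per_cont t : continuous B2per t.
Proof.
  set (n := Int_part (t + 1/2)).
  destruct (base_Int_part (t + 1/2)) as [H1 H2]. fold n in H1, H2.
  apply continuous_ext_loc with (fun z => (z - IZR n)^2 - Rabs (z - IZR n) + 1/6).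
  - exists (mkposreal (1/2) ltac:(lra)). intros z Hz.
    change (Rabs (z - t) < 1/2) in Hz. apply Rabs_def2 in Hz. cbv beta. change R in z.
    destruct (Rle_lt_dec (IZR n) z).
    + rewrite (B2per_on n z) by lra. rewrite Rabs_right by lra. reflexivity.
    + rewrite (B2per_on (n - 1) z) by (rewrite minus_IZR; lra).
      rewrite Rabs_left by lra. rewrite minus_IZR. match goal with |- ?a = ?b => change (a = b :> R) end. ring.
  - apply continuity_pt_filterlim.
    apply continuity_pt_plus; [apply continuity_pt_minus|].
    + apply derivable_continuous_pt; reg.
    + apply continuity_pt_filterlim. apply (continuous_Rabs_comp (fun z => z - IZR n)). apply continuity_pt_filterlim. reg.
    + apply continuity_pt_const; intros ? ?; reflexivity.
Qed.

Lemma ln_le_sub1 v : 0 < v -> ln v <= v - 1.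
Proof.
  intros Hv. pose proof (exp_ineq1_le (ln v)). rewrite exp_ln in H by lra. lra.
Qed.

Lemma exp_taylor2 u : Rabs (exp u - 1 - u) <= u^2 * exp (Rabs u).
Proof.
  pose proof (exp_ineq1_le u) as H0.
  rewrite Rabs_right by lra.
  destruct (Rle_lt_dec 0 u) as [Hu|Hu].
  - rewrite Rabs_right by lra.
    pose proof (exp_ineq1_le (-u)) as H1.
    assert (Hm : exp u * exp (-u) = 1) by (rewrite <- exp_plus; replace (u + - u) with 0 by ring; apply exp_0).
    pose proof (exp_pos u). pose proof (exp_pos (-u)).
    assert ((1+u) * exp (-u) >= 1 - u^2) by nra.
    nra.
  - rewrite Rabs_left by lra.
    pose proof (exp_ineq1_le (-u)) as H1.
    assert (Hm : exp u * exp (-u) = 1) by (rewrite <- exp_plus; replace (u + - u) with 0 by ring; apply exp_0).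
    pose proof (exp_pos u). pose proof (exp_pos (-u)).
    assert (exp u <= 1 / (1 - u)).
    { apply Rmult_le_reg_r with (1 - u); [lra|]. field_simplify; [|lra]. nra. }
    assert (exp u - 1 - u <= u^2).
    { apply Rle_trans with (1/(1-u) - 1 - u); [lra|].
      apply Rmult_le_reg_r with (1 - u); [lra|]. field_simplify; [|lra]. nra. }
    assert (1 <= exp (-u)) by (pose proof (exp_ineq1_le (-u)); lra).
    nra.
Qed.

Lemma ln1p_bounds v : 0 <= v -> v / (1 + v) <= ln (1 + v) <= v.
Proof.
  intros Hv. split.
  - pose proof (ln_le_sub1 (/ (1+v)) ltac:(apply Rinv_0_lt_compat; lra)) as H.
    rewrite ln_Rinv in H by lra.
    assert (/(1+v) - 1 = - (v/(1+v))) by (field; lra). lra.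
  - pose proof (ln_le_sub1 (1+v)). lra.
Qed.

Lemma exp_le_mono x y : x <= y -> exp x <= exp y.
Proof. intros [H|H]; [left; apply exp_increasing; lra| subst; lra]. Qed.

Lemma pow_le_exp_bound L j : 0 <= L -> (j <= 4)%nat -> L ^ j <= 2 * 32^4 * exp (L / 8).
Proof.
  intros HL Hj.
  assert (H1 : L / 32 <= exp (L / 32)) by (pose proof (exp_ineq1_le (L/32)); lra).
  assert (H2 : (L/32)^4 <= exp (L/32) ^ 4) by (apply pow_incr; split; lra).
  assert (H3 : exp (L/32) ^ 4 = exp (L/8)).
  { simpl. rewrite Rmult_1_r, <- !exp_plus. f_equal. field. }
  assert (H4 : L^4 <= 32^4 * exp (L/8)).
  { rewrite <- H3. replace (L^4) with (32^4 * (L/32)^4) by (field). 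
    apply Rmult_le_compat_l; [lra|exact H2]. }
  assert (H5 : L ^ j <= 1 + L^4).
  { assert (0 <= L^4) by (apply pow_le; lra).
    destruct (Rle_lt_dec L 1).
    - assert (L^j <= 1^j) by (apply pow_incr; lra). rewrite pow1 in H0. generalize dependent (L^j). intros. lra.
    - assert (L^j <= L^4) by (apply Rle_pow; [lra|lia]). generalize dependent (L^j). intros. lra. }
  pose proof (exp_ineq1_le (L/8)). generalize dependent (L^j). intros. lra.
Qed.

Lemma is_derive_Rpower_shift y q t : 0 < t + y ->
  is_derive (fun t => Rpower (t + y) q) t (q * Rpower (t + y) (q - 1)).
Proof.
  intros Ht. unfold Rpower. auto_derive; [lra|].
  replace ((q-1) * ln (t+y)) with (q * ln(t+y) + - ln(t+y)) by ring.
  rewrite exp_plus, exp_Ropp, exp_ln by lra. field. lra.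
Qed.

Lemma continuous_Rpower_shift y q t : 0 < t + y -> continuous (fun t => Rpower (t + y) q) t.
Proof.
  intros Ht. apply (ex_derive_continuous (fun t => Rpower (t+y) q)). eexists. apply is_derive_Rpower_shift; exact Ht.
Qed.

Lemma is_RInt_power y p a b : 0 < y -> p <> 1 -> 0 <= a -> 0 <= b ->
  is_RInt (fun t => Rpower (t + y) (-p)) a b
    ((Rpower (b + y) (1 - p) - Rpower (a + y) (1 - p)) / (1 - p)).
Proof.
  intros Hy Hp Ha Hb.
  assert (E : (Rpower (b + y) (1 - p) - Rpower (a + y) (1 - p)) / (1 - p)
     = minus (Rpower (b + y) (1 - p) / (1 - p)) (Rpower (a + y) (1 - p) / (1 - p))).
  { unfold minus, plus, opp; simpl. field. lra. }
  rewrite E. apply (is_RInt_derive (fun t => Rpower (t + y) (1 - p) / (1 - p))).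
  - intros x Hx. assert (0 <= x) by (destruct (Rle_dec a b); [rewrite Rmin_left in Hx|rewrite Rmin_right in Hx]; lra).
    unfold Rpower. auto_derive; [lra|].
    replace (-p * ln (x+y)) with ((1-p) * ln(x+y) + - ln(x+y)) by ring.
    rewrite exp_plus, exp_Ropp, exp_ln by lra. field. split; lra.
  - intros x Hx. assert (0 <= x) by (destruct (Rle_dec a b); [rewrite Rmin_left in Hx|rewrite Rmin_right in Hx]; lra).
    apply continuous_Rpower_shift; lra.
Qed.

Lemma Rpower_small q eps : q < 0 -> 0 < eps ->
  exists M, 0 < M /\ forall u, M <= u -> Rpower u q < eps.
Proof.
  intros Hq He. exists (exp (ln eps / q) + 1). split.
  { pose proof (exp_pos (ln eps / q)). lra. }
  intros u Hu. pose proof (exp_pos (ln eps / q)).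
  assert (H1 : ln eps / q < ln u).
  { rewrite <- (ln_exp (ln eps / q)) at 1. apply ln_increasing; lra. }
  unfold Rpower. rewrite <- (exp_ln eps) by lra. apply exp_increasing.
  assert (q * ln u < q * (ln eps / q)) by (apply Rmult_lt_gt_compat_neg_l; lra).
  replace (q * (ln eps / q)) with (ln eps) in H0 by (field; lra). lra.
Qed.

Lemma gen_of_lim (f : R -> R) a l :
  (forall b, a <= b -> ex_RInt f a b) ->
  filterlim (fun b => RInt f a b) (Rbar_locally p_infty) (locally l) ->
  is_RInt_gen f (at_point a) (Rbar_locally p_infty) l.
Proof.
  intros Hex Hlim P HP. unfold filtermapi.
  specialize (Hlim P HP). destruct Hlim as [M HM].
  apply (Filter_prod _ _ _ (fun x => x = a) (fun b => Rmax M a < b)).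
  - reflexivity.
  - exists (Rmax M a). auto.
  - intros x b -> Hb. simpl. exists (RInt f a b). split.
    + apply (RInt_correct f a b), Hex. pose proof (Rmax_r M a). lra.
    + apply HM. pose proof (Rmax_l M a). lra.
Qed.

Lemma DOM (f : R -> R) y p C : 0 < y -> 1 < p ->
  (forall t, 0 <= t -> continuous f t) ->
  (forall t, 0 <= t -> Rabs (f t) <= C * Rpower (t + y) (-p)) ->
  exists l, is_RInt_gen f (at_point 0) (Rbar_locally p_infty) l /\
    Rabs l <= C * Rpower y (1 - p) / (p - 1).
Proof.
  intros Hy Hp Hc Hb.
  assert (HC : 0 <= C).
  { specialize (Hb 0 (Rle_refl 0)). pose proof (Rabs_pos (f 0)).
    assert (0 < Rpower (0 + y) (-p)) by (unfold Rpower; apply exp_pos).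
    destruct (Rle_lt_dec 0 C); auto. nra. }
  assert (Hex : forall a b, 0 <= a -> 0 <= b -> ex_RInt f a b).
  { intros a b Ha Hb'. apply (ex_RInt_continuous (V:=R_CompleteNormedModule) f). intros z Hz. apply Hc.
    destruct (Rle_dec a b); [rewrite Rmin_left in Hz|rewrite Rmin_right in Hz]; lra. }
  assert (Hg : forall a b, 0 <= a <= b ->
    Rabs (RInt f a b) <= C * (Rpower (a + y) (1 - p) - Rpower (b + y) (1 - p)) / (p - 1)).
  { intros a b Hab.
    apply (norm_RInt_le f (fun t => C * Rpower (t + y) (-p)) a b); [lra| | |].
    - intros x Hx. apply Hb. lra.
    - apply (RInt_correct f a b), Hex; lra.
    - replace (C * (Rpower (a + y) (1 - p) - Rpower (b + y) (1 - p)) / (p - 1))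
        with (scal C ((Rpower (b + y) (1 - p) - Rpower (a + y) (1 - p)) / (1 - p))).
      + apply (is_RInt_scal (V:=R_NormedModule) (fun t => Rpower (t+y) (-p))), is_RInt_power; lra.
      + unfold scal; simpl; unfold mult; simpl. field. lra. }
  assert (Hpos : forall u, 0 < Rpower u (1 - p)) by (intros; unfold Rpower; apply exp_pos).
  set (Phi := fun b => RInt f 0 b).
  set (F := filtermap Phi (Rbar_locally p_infty)).
  assert (HF : ProperFilter F) by (apply filtermap_proper_filter, Rbar_locally_filter).
  assert (Hcau : cauchy F).
  { intros eps.
    destruct (Rpower_small (1 - p) (eps * (p - 1) / (C + 1))) as [M0 [HM0 HM]]; [lra| |].
    { apply Rdiv_lt_0_compat; [|lra]. apply Rmult_lt_0_compat; [apply cond_pos|lra]. }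
    exists (Phi M0). unfold F, filtermap. exists M0. intros b Hb0.
    change (Rabs (Phi b - Phi M0) < eps).
    unfold Phi.
    assert (HC2 : RInt f 0 M0 + RInt f M0 b = RInt f 0 b)
      by (apply (RInt_Chasles (V:=R_CompleteNormedModule) f); apply Hex; lra).
    replace (RInt f 0 b - RInt f 0 M0) with (RInt f M0 b) by lra.
    eapply Rle_lt_trans; [apply Hg; lra|].
    specialize (HM (M0 + y) ltac:(lra)). pose proof (Hpos (b + y)).
    assert (C * Rpower (M0 + y) (1 - p) <= (C + 1) * Rpower (M0 + y) (1 - p))
      by (specialize (Hpos (M0+y)); nra).
    apply Rmult_lt_reg_r with (p - 1); [lra|].
    unfold Rdiv. rewrite Rmult_assoc, Rinv_l, Rmult_1_r by lra.
    apply Rmult_lt_compat_r with (r := C + 1) in HM; [|lra].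
    unfold Rdiv in HM. rewrite Rmult_assoc, Rinv_l, Rmult_1_r in HM by lra.
    nra. }
  set (l := lim F). exists l.
  assert (Hlim : filterlim Phi (Rbar_locally p_infty) (locally l)).
  { intros P [eps HP]. apply (filter_imp (ball l eps)); [exact HP|].
    apply (complete_cauchy F HF Hcau eps). }
  split.
  - apply gen_of_lim; [intros b Hb'; apply Hex; lra| exact Hlim].
  - destruct (Rle_lt_dec (Rabs l) (C * Rpower y (1 - p) / (p - 1))) as [H|H]; [exact H|exfalso].
    set (e := Rabs l - C * Rpower y (1 - p) / (p - 1)).
    assert (He : 0 < e) by (unfold e; lra).
    destruct (Hlim (ball l (mkposreal e He)) (locally_ball l (mkposreal e He))) as [M HM].
    set (b := Rmax M 0 + 1).
    assert (Hb1 : M < b) by (unfold b; pose proof (Rmax_l M 0); lra).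
    assert (Hb2 : 0 <= b) by (unfold b; pose proof (Rmax_r M 0); lra).
    specialize (HM b Hb1). change (Rabs (Phi b - l) < e) in HM.
    specialize (Hg 0 b ltac:(lra)). fold (Phi b) in Hg.
    replace (0 + y) with y in Hg by ring.
    specialize (Hpos (b + y)).
    assert (C * (Rpower y (1 - p) - Rpower (b + y) (1 - p)) / (p - 1) <= C * Rpower y (1 - p) / (p - 1)).
    { unfold Rdiv. apply Rmult_le_compat_r; [left; apply Rinv_0_lt_compat; lra|]. nra. }
    pose proof (Rabs_triang_inv l (Phi b)). rewrite Rabs_minus_sym in HM.
    unfold e in HM. lra.
Qed.

Definition fk (k : nat) (s y t : R) := B2per t * (- ln (t + y))^k * Rpower (t + y) (- s - 2).
Definition Jk k s y := RInt_gen (fk k s y) (at_point 0) (Rbar_locally p_infty).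

Lemma fk_cont k s y t : 0 < t + y -> continuous (fk k s y) t.
Proof.
  intros Ht. unfold fk.
  apply (continuous_mult (fun t => B2per t * (- ln (t + y))^k) (fun t => Rpower (t + y) (-s-2))).
  - apply (continuous_mult B2per (fun t => (- ln (t + y))^k)).
    + apply B2per_cont.
    + apply (ex_derive_continuous (fun t => (- ln (t + y))^k)). auto_derive. lra.
  - apply continuous_Rpower_shift; lra.
Qed.

Definition Cb := 2 * 32^4 / 6.

Lemma fk_bound_gen k s y t : 1 <= y -> 0 <= t -> (k <= 4)%nat ->
  Rabs (fk k s y t) <= Cb * exp ((- s - 2 + 1/8) * ln (t + y)).
Proof.
  intros Hy Ht Hk. unfold fk, Cb.
  assert (HL : 0 <= ln (t + y)) by (rewrite <- ln_1; apply ln_le; lra).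
  rewrite !Rabs_mult. rewrite <- RPow_abs, Rabs_Ropp, (Rabs_right (ln (t+y))) by lra.
  rewrite (Rabs_right (Rpower (t+y) (-s-2))) by (left; unfold Rpower; apply exp_pos).
  pose proof (B2per_bound t). pose proof (pow_le_exp_bound _ k HL Hk).
  assert (0 <= ln (t + y) ^ k) by (apply pow_le; lra).
  unfold Rpower.
  replace ((- s - 2 + 1/8) * ln (t + y)) with (ln (t+y) / 8 + (-s-2) * ln (t+y)) by field.
  rewrite exp_plus.
  pose proof (exp_pos ((-s-2) * ln (t+y))).
  generalize dependent (ln (t+y) ^ k). intros.
  pose proof (Rabs_pos (B2per t)).
  apply Rle_trans with (1/6 * (2 * 32^4 * exp (ln (t + y) / 8)) * exp ((- s - 2) * ln (t + y))).
  - apply Rmult_le_compat_r; [lra|]. apply Rmult_le_compat; lra.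
  - lra.
Qed.

Lemma exp_le_Rpower c d u : 0 < u -> 1 <= u -> c <= d -> exp (c * ln u) <= Rpower u d.
Proof.
  intros Hu Hu1 Hcd. unfold Rpower. apply exp_le_mono.
  assert (0 <= ln u) by (rewrite <- ln_1; apply ln_le; lra). nra.
Qed.

Lemma fk_bound k s y t : 1 <= y -> 0 <= t -> (k <= 4)%nat -> -3/4 <= s ->
  Rabs (fk k s y t) <= Cb * Rpower (t + y) (- (9/8)).
Proof.
  intros Hy Ht Hk Hs. eapply Rle_trans; [apply fk_bound_gen; auto|].
  apply Rmult_le_compat_l; [unfold Cb; lra|]. apply exp_le_Rpower; lra.
Qed.

Lemma Jk_correct k s y : 1 <= y -> (k <= 4)%nat -> -3/4 <= s ->
  is_RInt_gen (fk k s y) (at_point 0) (Rbar_locally p_infty) (Jk k s y).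
Proof.
  intros Hy Hk Hs.
  destruct (DOM (fk k s y) y (9/8) Cb) as [l [Hl _]]; try lra.
  - intros t Ht. apply fk_cont. lra.
  - intros t Ht. apply fk_bound; auto.
  - unfold Jk. rewrite (is_RInt_gen_unique _ l Hl). exact Hl.
Qed.

Lemma g_bound k s h y t : 1 <= y -> 0 <= t ->
  Rabs (fk k (s + h) y t - fk k s y t - h * fk (S k) s y t)
  <= h^2 * Rabs (fk (k + 2) (s - Rabs h) y t).
Proof.
  intros Hy Ht. unfold fk.
  set (L := ln (t + y)).
  assert (HL : 0 <= L) by (unfold L; rewrite <- ln_1; apply ln_le; lra).
  unfold Rpower. fold L.
  set (E := exp ((- s - 2) * L)).
  assert (E1 : exp ((- (s + h) - 2) * L) = E * exp (- h * L)).
  { unfold E. rewrite <- exp_plus. f_equal. ring. }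
  assert (E2 : exp ((- (s - Rabs h) - 2) * L) = E * exp (Rabs (- h * L))).
  { unfold E. rewrite <- exp_plus. f_equal. rewrite Rabs_mult, Rabs_Ropp, (Rabs_right L) by lra. ring. }
  rewrite E1, E2.
  replace (B2per t * (- L) ^ k * (E * exp (- h * L)) - B2per t * (- L) ^ k * E -
      h * (B2per t * (- L) ^ S k * E))
    with ((B2per t * (- L) ^ k * E) * (exp (- h * L) - 1 - (- h * L))) by (simpl; ring).
  rewrite Rabs_mult. pose proof (exp_taylor2 (- h * L)).
  replace (h ^ 2 * Rabs (B2per t * (- L) ^ (k + 2) * (E * exp (Rabs (- h * L)))))
    with (Rabs (B2per t * (- L) ^ k * E) * ((- h * L)^2 * exp (Rabs (- h * L)))).
  - apply Rmult_le_compat_l; [apply Rabs_pos| exact H].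
  - rewrite pow_add. rewrite !Rabs_mult.
    rewrite (Rabs_right (exp _)) by (left; apply exp_pos).
    replace (Rabs ((-L)^2)) with ((-L)^2) by (rewrite Rabs_right; [reflexivity| apply Rle_ge, pow2_ge_0]).
    ring.
Qed.

Lemma Jk_taylor k s h y : 1 <= y -> (k <= 2)%nat -> -1/2 <= s <= 1/2 -> Rabs h <= 1/4 ->
  Rabs (Jk k (s + h) y - Jk k s y - h * Jk (S k) s y) <= 8 * Cb * h^2.
Proof.
  intros Hy Hk Hs Hh.
  assert (Hh' : -3/4 <= s + h) by (apply Rabs_le_between' in Hh || (pose proof (Rabs_le_between h (1/4)) as [A _]; specialize (A Hh)); lra).
  pose proof (Jk_correct k (s + h) y Hy ltac:(lia) ltac:(lra)) as H1.
  pose proof (Jk_correct k s y Hy ltac:(lia) ltac:(lra)) as H2.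
  pose proof (Jk_correct (S k) s y Hy ltac:(lia) ltac:(lra)) as H3.
  pose proof (is_RInt_gen_minus _ _ _ _ (is_RInt_gen_minus _ _ _ _ H1 H2) (is_RInt_gen_scal _ h _ H3)) as Hc.
  destruct (DOM (fun t => fk k (s + h) y t - fk k s y t - h * fk (S k) s y t) y (9/8) (h^2 * Cb))
    as [l [Hl Hlb]]; try lra.
  - intros t Ht. 
    apply (continuous_minus (fun t => fk k (s + h) y t - fk k s y t) (fun t => h * fk (S k) s y t)).
    + apply (continuous_minus (fk k (s+h) y) (fk k s y)); apply fk_cont; lra.
    + apply (continuous_scal_r h (fk (S k) s y)). apply fk_cont; lra.
  - intros t Ht. eapply Rle_trans; [apply g_bound; auto|].
    rewrite Rmult_assoc. apply Rmult_le_compat_l; [apply pow2_ge_0|].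
    apply fk_bound; auto. lia. 
    pose proof (Rabs_le_between h (1/4)) as [A _]. specialize (A Hh). pose proof (Rabs_pos h).
    destruct (Rle_dec 0 h); [rewrite Rabs_right in * by lra|rewrite Rabs_left in * by lra]; lra.
  - assert (Eq : l = Jk k (s + h) y - Jk k s y - h * Jk (S k) s y).
    { rewrite <- (is_RInt_gen_unique _ l Hl).
      apply is_RInt_gen_unique. exact Hc. }
    rewrite <- Eq. eapply Rle_trans; [exact Hlb|].
    assert (Rpower y (1 - 9/8) <= 1).
    { apply Rle_trans with (Rpower y 0); [apply Rle_Rpower; lra| rewrite Rpower_O; lra]. }
    assert (0 <= h^2) by apply pow2_ge_0.
    unfold Cb in *. 
    replace (h ^ 2 * (2 * 32 ^ 4 / 6) * Rpower y (1 - 9 / 8) / (9 / 8 - 1))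
      with (8 * (2 * 32 ^ 4 / 6) * h^2 * Rpower y (1 - 9 / 8)) by field.
    assert (0 <= 8 * (2 * 32 ^ 4 / 6) * h^2) by nra.
    generalize dependent (Rpower y (1 - 9/8)). intros. nra.
Qed.

Lemma Jk_deriv k s y : 1 <= y -> (k <= 2)%nat -> -1/2 <= s <= 1/2 ->
  is_derive (fun z => Jk k z y) s (Jk (S k) s y).
Proof.
  intros Hy Hk Hs. apply is_derive_Reals. intros eps Heps.
  assert (HC : 0 < 8 * Cb) by (unfold Cb; lra).
  assert (Hd : 0 < Rmin (1/4) (eps / (8 * Cb))).
  { apply Rmin_pos; [lra|]. apply Rdiv_lt_0_compat; lra. }
  exists (mkposreal _ Hd). intros h Hh0 Hhd. simpl in Hhd.
  pose proof (Rmin_l (1/4) (eps / (8 * Cb))). pose proof (Rmin_r (1/4) (eps / (8 * Cb))).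
  pose proof (Jk_taylor k s h y Hy Hk Hs ltac:(lra)) as HT.
  replace ((Jk k (s + h) y - Jk k s y) / h - Jk (S k) s y)
    with ((Jk k (s + h) y - Jk k s y - h * Jk (S k) s y) / h) by (field; auto).
  unfold Rdiv. rewrite Rabs_mult, Rabs_Rinv by auto.
  assert (0 < Rabs h) by (apply Rabs_pos_lt; auto).
  apply Rmult_lt_reg_r with (Rabs h); [lra|].
  rewrite Rmult_assoc, Rinv_l, Rmult_1_r by lra.
  replace (h^2) with (Rabs h * Rabs h) in H by (rewrite <- Rabs_mult, Rabs_right; [ring| apply Rle_ge; nra]).
  assert (8 * Cb * Rabs h < eps).
  { apply Rmult_lt_reg_r with (/ (8*Cb)); [apply Rinv_0_lt_compat; lra|].
    replace (8 * Cb * Rabs h * / (8 * Cb)) with (Rabs h) by (field; lra). lra. }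
  assert (E : h^2 = Rabs h * Rabs h) by (rewrite <- Rabs_mult, Rabs_right; [ring| apply Rle_ge; nra]). rewrite E in HT. nra.
Qed.

Definition f0 s y := fun t => B2per t * Rpower (t + y) (- s - 2).

Lemma f0_fk s y : f0 s y = fk 0 s y.
Proof. apply functional_extensionality; intro t. unfold f0, fk. simpl. ring. Qed.

Lemma f0_cont s y t : 0 < t + y -> continuous (f0 s y) t.
Proof. intros. rewrite f0_fk. apply fk_cont; auto. Qed.

Lemma lim_of_gen (f : R -> R) a l :
  is_RInt_gen f (at_point a) (Rbar_locally p_infty) l ->
  filterlim (fun b => RInt f a b) (Rbar_locally p_infty) (locally l).
Proof.
  intros H P HP. specialize (H P HP). destruct H as [Q R HQ HR HQR].
  unfold filtermap. apply (filter_imp R); [|exact HR].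
  intros b Hb. destruct (HQR a b HQ Hb) as [v [Hv Pv]]. simpl in Hv.
  rewrite (is_RInt_unique f a b v Hv). exact Pv.
Qed.

Lemma RInt_shift1 s y b : 0 < y -> 1 <= b ->
  RInt (f0 s y) 0 b = RInt (f0 s y) 0 1 + RInt (f0 s (y + 1)) 0 (b - 1).
Proof.
  intros Hy Hb.
  assert (Hex : forall u v, 0 <= u -> 0 <= v -> ex_RInt (f0 s y) u v).
  { intros u v Hu Hv. apply (ex_RInt_continuous (V:=R_CompleteNormedModule) (f0 s y)).
    intros z Hz. apply f0_cont.
    destruct (Rle_dec u v); [rewrite Rmin_left in Hz|rewrite Rmin_right in Hz]; lra. }
  rewrite <- (RInt_Chasles (V:=R_CompleteNormedModule) (f0 s y) 0 1 b) by (apply Hex; lra).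
  change (plus ?a ?b) with (a + b). f_equal.
  assert (H : is_RInt (f0 s y) (1 * 0 + 1) (1 * (b - 1) + 1) (RInt (f0 s y) 1 b)).
  { replace (1 * 0 + 1) with 1 by ring. replace (1 * (b - 1) + 1) with b by ring.
    apply (RInt_correct (f0 s y)), Hex; lra. }
  apply is_RInt_comp_lin in H.
  symmetry. apply is_RInt_unique.
  eapply is_RInt_ext; [|exact H].
  intros t _. unfold f0. unfold scal; simpl; unfold mult; simpl.
  replace (1 * t + 1) with (t + 1) by ring. rewrite B2per_periodic.
  replace (t + 1 + y) with (t + (y + 1)) by ring. ring.
Qed.

Lemma f0_gen_shift s y : 0 < y -> -3/4 <= s ->
  RInt_gen (f0 s y) (at_point 0) (Rbar_locally p_infty) = RInt (f0 s y) 0 1 + Jk 0 s (y + 1).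
Proof.
  intros Hy Hs. apply is_RInt_gen_unique. apply gen_of_lim.
  - intros b Hb. apply (ex_RInt_continuous (V:=R_CompleteNormedModule) (f0 s y)).
    intros z Hz. apply f0_cont. rewrite Rmin_left in Hz; lra.
  - pose proof (Jk_correct 0 s (y + 1) ltac:(lra) ltac:(lia) Hs) as HJ.
    rewrite <- f0_fk in HJ. apply lim_of_gen in HJ.
    intros P [eps HP]. unfold filtermap.
    destruct (HJ (ball (Jk 0 s (y + 1)) eps) (locally_ball _ eps)) as [M HM].
    exists (Rmax (M + 1) 1). intros b Hb.
    pose proof (Rmax_l (M+1) 1). pose proof (Rmax_r (M+1) 1).
    apply HP. rewrite (RInt_shift1 s y b) by lra.
    specialize (HM (b - 1) ltac:(lra)).
    change (Rabs (RInt (f0 s y) 0 1 + RInt (f0 s (y + 1)) 0 (b - 1) - (RInt (f0 s y) 0 1 + Jk 0 s (y + 1))) < eps).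
    change (Rabs (RInt (f0 s (y + 1)) 0 (b - 1) - Jk 0 s (y + 1)) < eps) in HM.
    replace (RInt (f0 s y) 0 1 + RInt (f0 s (y + 1)) 0 (b - 1) - (RInt (f0 s y) 0 1 + Jk 0 s (y + 1)))
      with (RInt (f0 s (y + 1)) 0 (b - 1) - Jk 0 s (y + 1)) by ring. exact HM.
Qed.

Definition Aanti s y t := 1/2 * Rpower (t + y) (- s - 2) *
  ((t^2 - t + 1/6) * (- s) * (t + y) - (2 * t - 1) * (t + y)^2 + 2 * (t + y)^3 / (1 - s)).

Lemma f0_01 s y : 0 < y -> s <> 1 ->
  s * (s + 1) / 2 * RInt (f0 s y) 0 1 = Aanti s y 1 - Aanti s y 0.
Proof.
  intros Hy Hs.
  assert (H1 : is_RInt (fun t => s * (s + 1) / 2 * ((t^2 - t + 1/6) * Rpower (t + y) (- s - 2))) 0 1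
                 (Aanti s y 1 - Aanti s y 0)).
  { apply (is_RInt_derive (Aanti s y)).
    - intros x Hx. rewrite Rmin_left, Rmax_right in Hx by lra.
      unfold Aanti, Rpower. auto_derive; [lra|].
      replace ((- s - 2) * ln (x + y)) with ((- s - 2) * ln (x + y)) by ring.
      field. split; lra.
    - intros x Hx. rewrite Rmin_left, Rmax_right in Hx by lra.
      apply (continuous_scal_r (s * (s + 1) / 2) (fun t => (t^2 - t + 1/6) * Rpower (t + y) (- s - 2))).
      apply (continuous_mult (fun t => t^2 - t + 1/6) (fun t => Rpower (t + y) (- s - 2))).
      + apply (ex_derive_continuous (fun t => t^2 - t + 1/6)). auto_derive. auto.
      + apply continuous_Rpower_shift. lra. }
  assert (H2 : is_RInt (fun t => s * (s + 1) / 2 * f0 s y t) 0 1 (Aanti s y 1 - Aanti s y 0)).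
  { eapply is_RInt_ext; [|exact H1]. intros t Ht. rewrite Rmin_left, Rmax_right in Ht by lra.
    unfold f0. rewrite B2per_01 by lra. reflexivity. }
  assert (H3 : ex_RInt (f0 s y) 0 1).
  { apply (ex_RInt_continuous (V:=R_CompleteNormedModule) (f0 s y)).
    intros z Hz. rewrite Rmin_left, Rmax_right in Hz by lra. apply f0_cont. lra. }
  apply (RInt_correct (f0 s y)) in H3.
  apply (is_RInt_scal (V:=R_NormedModule) _ _ _ (s * (s + 1) / 2)) in H3.
  rewrite <- (is_RInt_unique _ _ _ _ H2). symmetry. apply is_RInt_unique. exact H3.
Qed.

Lemma Rpower_add_nat y c n : 0 < y -> Rpower y (c + INR n) = Rpower y c * y ^ n.
Proof. intros Hy. rewrite Rpower_plus, Rpower_pow by lra. reflexivity. Qed.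

Lemma Rpower_m2 y s k : 0 < y -> Rpower y (- s - 2 + INR k) = Rpower y (- s - 2) * y ^ k.
Proof. apply Rpower_add_nat. Qed.

Lemma hz_shift s y : 0 < y -> -1/2 <= s <= 1/2 ->
  hurwitz_zeta s y = Rpower y (- s) + hurwitz_zeta s (y + 1).
Proof.
  intros Hy Hs. unfold hurwitz_zeta.
  change (fun t => B2per t * Rpower (t + y) (- s - 2)) with (f0 s y).
  change (fun t => B2per t * Rpower (t + (y + 1)) (- s - 2)) with (f0 s (y + 1)).
  rewrite f0_gen_shift by lra.
  replace (RInt_gen (f0 s (y + 1)) (at_point 0) (Rbar_locally p_infty)) with (Jk 0 s (y + 1))
    by (unfold Jk; rewrite f0_fk; reflexivity).
  pose proof (f0_01 s y Hy ltac:(lra)) as HA.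
  replace (s * (s + 1) / 2 * (RInt (f0 s y) 0 1 + Jk 0 s (y + 1)))
    with (s * (s + 1) / 2 * RInt (f0 s y) 0 1 + s * (s + 1) / 2 * Jk 0 s (y + 1)) by ring.
  rewrite HA. unfold Aanti.
  replace (1 + y) with (y + 1) by ring. replace (0 + y) with y by ring.
  assert (Hy1 : 0 < y + 1) by lra.
  assert (E1 : forall z, 0 < z -> Rpower z (1 - s) = Rpower z (- s - 2) * z^3).
  { intros z Hz. rewrite <- Rpower_m2 by lra. f_equal. simpl. ring. }
  assert (E2 : forall z, 0 < z -> Rpower z (- s) = Rpower z (- s - 2) * z^2).
  { intros z Hz. rewrite <- Rpower_m2 by lra. f_equal. simpl. ring. }
  assert (E3 : forall z, 0 < z -> Rpower z (- s - 1) = Rpower z (- s - 2) * z^1).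
  { intros z Hz. rewrite <- Rpower_m2 by lra. f_equal. simpl. ring. }
  rewrite (E1 y), (E1 (y+1)), (E2 y), (E2 (y+1)), (E3 y), (E3 (y+1)) by lra.
  field. lra.
Qed.

Lemma dmul (f g : R -> R) x df dg : is_derive f x df -> is_derive g x dg ->
  is_derive (fun t => f t * g t) x (df * g x + f x * dg).
Proof. intros H1 H2. apply (is_derive_mult f g x df dg H1 H2). intros; apply Rmult_comm. Qed.
Lemma dplus (f g : R -> R) x df dg : is_derive f x df -> is_derive g x dg ->
  is_derive (fun t => f t + g t) x (df + dg).
Proof. intros H1 H2. apply (is_derive_plus f g x df dg H1 H2). Qed.
Lemma dminus (f g : R -> R) x df dg : is_derive f x df -> is_derive g x dg ->
  is_derive (fun t => f t - g t) x (df - dg).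
Proof. intros H1 H2. apply (is_derive_minus f g x df dg H1 H2). Qed.

Lemma D2_lemma (f f1 : R -> R) v :
  (forall s, -1/2 < s < 1/2 -> is_derive f s (f1 s)) -> is_derive f1 0 v -> Derive_n f 2 0 = v.
Proof.
  intros H1 H2. simpl.
  rewrite (Derive_ext_loc (Derive (fun x => f x)) f1).
  - apply is_derive_unique; exact H2.
  - exists (mkposreal (1/2) ltac:(lra)). intros s Hs. change (Rabs (s - 0) < 1/2) in Hs.
    apply is_derive_unique. apply H1. apply Rabs_def2 in Hs. lra.
Qed.

Definition Ez s y := Rpower y (1 - s) / (s - 1) + Rpower y (- s) / 2 + s * Rpower y (- s - 1) / 12.
Definition Ez1 s y := - ln y * Rpower y (1 - s) / (s - 1) - Rpower y (1 - s) / (s - 1)^2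
   - ln y * Rpower y (- s) / 2 + (1 - s * ln y) * Rpower y (- s - 1) / 12.
Definition hfun y := - y * (ln y ^ 2 - 2 * ln y + 2) + ln y ^ 2 / 2 - ln y / (6 * y).

Lemma Ez_deriv s y : 0 < y -> s <> 1 -> is_derive (fun s => Ez s y) s (Ez1 s y).
Proof.
  intros Hy Hs. unfold Ez, Ez1, Rpower. auto_derive; [lra|].
  replace (1 + - s) with (1 - s) by ring. replace (- s + - (1)) with (- s - 1) by ring.
  field. lra.
Qed.

Lemma Ez1_deriv y : 0 < y -> is_derive (fun s => Ez1 s y) 0 (hfun y).
Proof.
  intros Hy. unfold Ez1, hfun, Rpower. auto_derive; [repeat split; lra|].
  replace ((1 + - 0) * ln y) with (ln y) by ring.
  replace (- 0 * ln y) with 0 by ring.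
  replace ((- 0 + - (1)) * ln y) with (- ln y) by ring.
  rewrite exp_0, exp_Ropp, exp_ln by lra. field. lra.
Qed.

Definition F1 s y := Ez1 s y - (2 * s + 1) / 2 * Jk 0 s y - s * (s + 1) / 2 * Jk 1 s y.

Lemma hz_Jk s y : hurwitz_zeta s y = Ez s y - s * (s + 1) / 2 * Jk 0 s y.
Proof.
  unfold hurwitz_zeta, Ez, Jk. rewrite <- f0_fk. reflexivity.
Qed.

Lemma hz_deriv s y : 1 <= y -> -1/2 <= s <= 1/2 ->
  is_derive (fun s => hurwitz_zeta s y) s (F1 s y).
Proof.
  intros Hy Hs.
  apply (is_derive_ext (fun s => Ez s y - s * (s + 1) / 2 * Jk 0 s y)).
  { intros; symmetry; apply hz_Jk. }
  unfold F1.
  replace (Ez1 s y - (2 * s + 1) / 2 * Jk 0 s y - s * (s + 1) / 2 * Jk 1 s y)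
    with (Ez1 s y - ((2 * s + 1) / 2 * Jk 0 s y + s * (s + 1) / 2 * Jk 1 s y)) by ring.
  apply dminus.
  - apply Ez_deriv; lra.
  - apply (dmul (fun s => s * (s + 1) / 2) (fun s => Jk 0 s y)).
    + auto_derive; auto; try field.
    + apply Jk_deriv; auto.
Qed.

Lemma F1_deriv y : 1 <= y -> is_derive (fun s => F1 s y) 0 (hfun y - Jk 0 0 y - Jk 1 0 y).
Proof.
  intros Hy. unfold F1.
  replace (hfun y - Jk 0 0 y - Jk 1 0 y) with
    (hfun y - ((2 * 1 / 2 * Jk 0 0 y + (2 * 0 + 1)/2 * Jk 1 0 y))
       - (((2 * 0 + 1) / 2 * Jk 1 0 y + 0 * (0 + 1) / 2 * Jk 2 0 y))) by field.
  apply dminus; [apply dminus|].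
  - apply Ez1_deriv; lra.
  - apply (dmul (fun s => (2 * s + 1) / 2) (fun s => Jk 0 s y)).
    + auto_derive; auto; try field.
    + apply Jk_deriv; auto; lra.
  - apply (dmul (fun s => s * (s + 1) / 2) (fun s => Jk 1 s y)).
    + auto_derive; auto; try field.
    + apply Jk_deriv; auto; lra.
Qed.

Definition Zf y := hfun y - Jk 0 0 y - Jk 1 0 y.

Lemma Z_formula y : 1 <= y -> hurwitz_zeta2_at0 y = Zf y.
Proof.
  intros Hy. unfold hurwitz_zeta2_at0.
  apply (D2_lemma _ (fun s => F1 s y)).
  - intros s Hs. apply hz_deriv; lra.
  - apply F1_deriv; auto.
Qed.

Lemma Z_shift y : 0 < y -> hurwitz_zeta2_at0 y = (ln y)^2 + hurwitz_zeta2_at0 (y + 1).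
Proof.
  intros Hy. rewrite (Z_formula (y + 1)) by lra. unfold hurwitz_zeta2_at0.
  rewrite (Derive_n_ext_loc (fun s => hurwitz_zeta s y) (fun s => Rpower y (- s) + hurwitz_zeta s (y + 1))).
  - apply (D2_lemma _ (fun s => - ln y * Rpower y (- s) + F1 s (y + 1))).
    + intros s Hs. apply dplus.
      * unfold Rpower. auto_derive; auto. ring.
      * apply hz_deriv; lra.
    + apply dplus.
      * unfold Rpower. auto_derive; auto.
        replace (- 0 * ln y) with 0 by ring. rewrite exp_0. ring.
      * apply F1_deriv; lra.
  - exists (mkposreal (1/2) ltac:(lra)). intros s Hs. change (Rabs (s - 0) < 1/2) in Hs.
    apply Rabs_def2 in Hs. apply hz_shift; lra.
Qed.

Lemma ln_le_pow4 u : 0 < u -> ln u <= 4 * Rpower u (1/4).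
Proof.
  intros Hu. assert (H : ln (Rpower u (1/4)) <= Rpower u (1/4) - 1)
    by (apply ln_le_sub1; unfold Rpower; apply exp_pos).
  rewrite ln_Rpower in H. lra.
Qed.

Lemma J0_bound y : 1 <= y -> Rabs (Jk 0 0 y) <= Rpower y (-1) / 6.
Proof.
  intros Hy.
  destruct (DOM (fk 0 0 y) y 2 (1/6)) as [l [Hl Hb]]; try lra.
  - intros t Ht. apply fk_cont. lra.
  - intros t Ht. unfold fk. simpl. rewrite Rmult_1_r, Rabs_mult.
    rewrite (Rabs_right (Rpower _ _)) by (left; unfold Rpower; apply exp_pos).
    replace (- 0 - 2) with (-2) by ring.
    apply Rmult_le_compat_r; [left; unfold Rpower; apply exp_pos| apply B2per_bound].
  - assert (E1 : Jk 0 0 y = l) by (unfold Jk; apply is_RInt_gen_unique; exact Hl).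
    rewrite E1.
    replace (1 - 2) with (-1) in Hb by ring. replace (1 / 6 * Rpower y (-1) / (2 - 1)) with (Rpower y (-1) / 6) in Hb by field. exact Hb.
Qed.

Lemma J1_bound y : 1 <= y -> Rabs (Jk 1 0 y) <= 8/9 * Rpower y (-(3/4)).
Proof.
  intros Hy.
  destruct (DOM (fk 1 0 y) y (7/4) (2/3)) as [l [Hl Hb]]; try lra.
  - intros t Ht. apply fk_cont. lra.
  - intros t Ht. unfold fk. simpl. rewrite Rmult_1_r, !Rabs_mult.
    rewrite (Rabs_right (Rpower _ _)) by (left; unfold Rpower; apply exp_pos).
    replace (- 0 - 2) with (-2) by ring.
    assert (HL : 0 <= ln (t + y)) by (rewrite <- ln_1; apply ln_le; lra).
    rewrite Rabs_Ropp, (Rabs_right (ln (t + y))) by lra.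
    pose proof (ln_le_pow4 (t + y) ltac:(lra)).
    assert (E : Rpower (t + y) (1/4) * Rpower (t + y) (-2) = Rpower (t + y) (- (7/4)))
      by (rewrite <- Rpower_plus; f_equal; field).
    pose proof (B2per_bound t). pose proof (Rabs_pos (B2per t)).
    assert (0 < Rpower (t + y) (-2)) by (unfold Rpower; apply exp_pos).
    apply Rle_trans with (1/6 * (4 * Rpower (t + y) (1/4)) * Rpower (t + y) (-2)).
    + apply Rmult_le_compat_r; [lra|]. apply Rmult_le_compat; lra.
    + rewrite <- E. lra.
  - assert (E1 : Jk 1 0 y = l) by (unfold Jk; apply is_RInt_gen_unique; exact Hl).
    rewrite E1.
    replace (1 - 7/4) with (-(3/4)) in Hb by field.
    replace (2 / 3 * Rpower y (- (3 / 4)) / (7 / 4 - 1)) with (8/9 * Rpower y (- (3 / 4))) in Hb by field.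
    exact Hb.
Qed.

Lemma Z_near y : 1 <= y -> Rabs (hurwitz_zeta2_at0 y - hfun y) <= 2 * Rpower y (-(3/4)).
Proof.
  intros Hy. rewrite Z_formula by auto. unfold Zf.
  pose proof (J0_bound y Hy). pose proof (J1_bound y Hy).
  assert (Rpower y (-1) <= Rpower y (-(3/4))) by (apply Rle_Rpower; lra).
  replace (hfun y - Jk 0 0 y - Jk 1 0 y - hfun y) with (- (Jk 0 0 y + Jk 1 0 y)) by ring.
  rewrite Rabs_Ropp. eapply Rle_trans; [apply Rabs_triang|].
  assert (0 < Rpower y (-(3/4))) by (unfold Rpower; apply exp_pos). lra.
Qed.

Notation Z := hurwitz_zeta2_at0.

Definition Kt u := 2 * ln 2 ^ 2 * u + 4 * ln 2 * u * ln u - 4 * ln 2 * u - ln 2 * ln u - ln 2 ^ 2 / 2.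

Lemma Kh_exact u : 0 < u ->
  let L := ln u in let d := ln (u + 1/2) - ln u in
  hfun u + hfun (u + 1/2) - hfun (2 * u) - Kt u =
  (L - 1) * (1 - 2 * (u + 1/2) * d) + L * d - u * d^2 - L / (6 * u)
   - (L + d) / (6 * (u + 1/2)) + (L + ln 2) / (12 * u).
Proof.
  intros Hu L d. unfold hfun, Kt.
  rewrite ln_mult by lra. fold L.
  replace (ln (u + 1/2)) with (L + d) by (unfold d, L; ring).
  field. lra.
Qed.

Lemma Rpower_pos u c : 0 < Rpower u c.
Proof. unfold Rpower; apply exp_pos. Qed.

Lemma Rpower_neg_mono a b c : 0 < a <= b -> 0 <= c -> Rpower b (- c) <= Rpower a (- c).
Proof.
  intros Hab Hc. rewrite !Rpower_Ropp. apply Rinv_le_contravar; [apply Rpower_pos|].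
  apply Rle_Rpower_l; lra.
Qed.

Lemma inv_le_R34 u : 1 <= u -> / u <= Rpower u (-(3/4)).
Proof.
  intros Hu. rewrite <- (Rpower_1 u) at 1 by lra. rewrite <- Rpower_Ropp.
  apply Rle_Rpower; lra.
Qed.

Lemma lnu_le_R34 u : 1 <= u -> ln u / u <= 4 * Rpower u (-(3/4)).
Proof.
  intros Hu. pose proof (ln_le_pow4 u ltac:(lra)).
  assert (E : Rpower u (1/4) * / u = Rpower u (-(3/4))).
  { rewrite <- (Rpower_1 u) at 2 by lra. rewrite <- Rpower_Ropp, <- Rpower_plus. f_equal. field. }
  rewrite <- E. change (ln u / u) with (ln u * / u). assert (0 < / u) by (apply Rinv_0_lt_compat; lra). nra.
Qed.

Lemma small_bound u : 1 <= u ->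
  Rabs (hfun u + hfun (u + 1/2) - hfun (2 * u) - Kt u) <= 2 * ((1 + ln u) / u).
Proof.
  intros Hu. rewrite Kh_exact by lra. cbv zeta.
  set (L := ln u). set (d := ln (u + 1/2) - ln u). set (v := 1 / (2 * u)).
  change (ln (u + 1/2) - L) with d.
  assert (HL : 0 <= L) by (unfold L; rewrite <- ln_1; apply ln_le; lra).
  assert (Hv : 0 < v <= 1/2) by (unfold v; split; [apply Rdiv_lt_0_compat; lra|];
     apply Rmult_le_reg_r with (2 * u); [lra|]; unfold Rdiv; field_simplify; lra).
  assert (Hd : d = ln (1 + v)).
  { unfold d, v. replace (u + 1/2) with (u * (1 + 1 / (2 * u))) by (field; lra).
    rewrite ln_mult; [ring|lra|]. pose proof (Rdiv_lt_0_compat 1 (2*u)). lra. }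
  destruct (ln1p_bounds v ltac:(lra)) as [Hd1 Hd2]. rewrite <- Hd in Hd1, Hd2.
  assert (Hw : 1 <= 2 * (u + 1/2) * d <= 1 + v).
  { assert (E2 : 2 * (u + 1/2) * (v / (1 + v)) = 1) by (unfold v; field; lra).
    assert (E3 : 2 * (u + 1/2) * v = 1 + v) by (unfold v; field; lra).
    split.
    - apply Rle_trans with (2 * (u + 1/2) * (v / (1 + v))); [lra| apply Rmult_le_compat_l; lra].
    - apply Rle_trans with (2 * (u + 1/2) * v); [apply Rmult_le_compat_l; lra| lra]. }
  assert (Hd0 : 0 <= d) by (apply Rle_trans with (v / (1+v)); [apply Rlt_le, Rdiv_lt_0_compat|]; lra).
  assert (Hu1 : / u = 2 * v) by (unfold v; field; lra).
  assert (T1 : Rabs ((L - 1) * (1 - 2 * (u + 1/2) * d)) <= (L + 1) * v).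
  { rewrite Rabs_mult. apply Rmult_le_compat; try apply Rabs_pos.
    - apply Rabs_le; lra.
    - apply Rabs_le; lra. }
  assert (T2 : 0 <= L * d <= L * v) by (split; nra).
  assert (T3 : 0 <= u * d^2 <= v / 2).
  { assert (d^2 <= v^2) by (apply pow_incr; lra).
    split; [nra|]. apply Rle_trans with (u * v^2); [apply Rmult_le_compat_l; lra|]. unfold v. right. field. lra. }
  assert (T4 : L / (6 * u) = L * v / 3) by (unfold v; field; lra).
  assert (T5 : 0 <= (L + d) / (6 * (u + 1/2)) <= (L + v) * v / 3).
  { split; [apply Rdiv_le_0_compat; lra|].
    apply Rle_trans with ((L + v) / (6 * u)).
    - unfold Rdiv. apply Rmult_le_compat; [lra| left; apply Rinv_0_lt_compat; lra| lra|].
      apply Rinv_le_contravar; lra.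
    - unfold v. right. field. lra. }
  assert (Hl2 : 0 < ln 2 < 1).
  { split; [rewrite <- ln_1; apply ln_increasing; lra|].
    pose proof (ln_le_sub1 2 ltac:(lra)). pose proof (ln_increasing 2 (exp 1)).
    rewrite ln_exp in H0. pose proof exp_ineq1_le 1. 
    assert (2 < exp 1 \/ 2 >= exp 1) as [Hc|Hc] by lra; [apply H0 in Hc; lra|].
    pose proof (exp_ineq1_le 1). exfalso.
    assert (exp 1 > 2).
    { replace 1 with (1/2 + 1/2) by field. rewrite exp_plus.
      pose proof (exp_ineq1_le (1/2)). nra. }
    lra. }
  assert (T6 : 0 <= (L + ln 2) / (12 * u) <= (L + 1) * v / 6).
  { split; [apply Rdiv_le_0_compat; lra|]. unfold Rdiv. rewrite Rinv_mult, Hu1.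
    assert (0 < / 12) by lra. nra. }
  assert (Hfin : (1 + L) / u = 2 * v * (1 + L)) by (unfold Rdiv; rewrite Hu1; ring).
  rewrite Hfin.
  pose proof (Rabs_triang ((L - 1) * (1 - 2 * (u + 1 / 2) * d))
     (L * d - u * d ^ 2 - L / (6 * u) - (L + d) / (6 * (u + 1 / 2)) + (L + ln 2) / (12 * u))).
  replace ((L - 1) * (1 - 2 * (u + 1 / 2) * d) + L * d - u * d ^ 2 - L / (6 * u) -
    (L + d) / (6 * (u + 1 / 2)) + (L + ln 2) / (12 * u)) with
    ((L - 1) * (1 - 2 * (u + 1 / 2) * d) +
     (L * d - u * d ^ 2 - L / (6 * u) - (L + d) / (6 * (u + 1 / 2)) + (L + ln 2) / (12 * u))) by ring.
  eapply Rle_trans; [exact H|].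
  assert (Rabs (L * d - u * d ^ 2 - L / (6 * u) - (L + d) / (6 * (u + 1 / 2)) + (L + ln 2) / (12 * u))
     <= L * v + v / 2 + L * v / 3 + (L + v) * v / 3 + (L + 1) * v / 6).
  { apply Rabs_le. rewrite T4. split; nra. }
  nra.
Qed.

Lemma abs_split a b : Rabs a <= b -> -b <= a <= b.
Proof. unfold Rabs; destruct Rcase_abs; intros; lra. Qed.

Definition KZ u := Z u + Z (u + 1/2) - Z (2 * u).

Lemma KZ_near u : 1 <= u -> Rabs (KZ u - Kt u) <= 16 * Rpower u (-(3/4)).
Proof.
  intros Hu. unfold KZ.
  pose proof (Z_near u Hu) as H1. pose proof (Z_near (u + 1/2) ltac:(lra)) as H2.
  pose proof (Z_near (2 * u) ltac:(lra)) as H3. pose proof (small_bound u Hu) as H4.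
  pose proof (Rpower_neg_mono u (u + 1/2) (3/4) ltac:(lra) ltac:(lra)).
  pose proof (Rpower_neg_mono u (2 * u) (3/4) ltac:(lra) ltac:(lra)).
  pose proof (inv_le_R34 u Hu). pose proof (lnu_le_R34 u Hu).
  assert (E : (1 + ln u) / u = / u + ln u / u) by (field; lra). rewrite E in H4.
  replace (Z u + Z (u + 1 / 2) - Z (2 * u) - Kt u) with
    ((Z u - hfun u) + (Z (u + 1/2) - hfun (u + 1/2)) - (Z (2 * u) - hfun (2 * u))
     + (hfun u + hfun (u + 1 / 2) - hfun (2 * u) - Kt u)) by ring.
  set (a1 := Z u - hfun u) in *. set (a2 := Z (u + 1/2) - hfun (u + 1/2)) in *.
  set (a3 := Z (2 * u) - hfun (2 * u)) in *. set (a4 := hfun u + hfun (u + 1 / 2) - hfun (2 * u) - Kt u) in *.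
  apply Rabs_le. apply abs_split in H1. apply abs_split in H2. apply abs_split in H3. apply abs_split in H4.
  lra.
Qed.

Lemma ln2_bounds : 0 < ln 2 < 1.
Proof.
  split; [rewrite <- ln_1; apply ln_increasing; lra|].
  assert (exp 1 > 2).
  { replace 1 with (1/2 + 1/2) by field. rewrite exp_plus.
    pose proof (exp_ineq1_le (1/2)). nra. }
  rewrite <- (ln_exp 1). apply ln_increasing; lra.
Qed.

Lemma delta_bounds c n : 0 < c -> 1 <= n ->
  0 <= ln (c + n) - ln n <= c / n /\
  c <= (c + n) * (ln (c + n) - ln n) <= c + c^2 / n.
Proof.
  intros Hc Hn.
  assert (Hd : ln (c + n) - ln n = ln (1 + c / n)).
  { replace (c + n) with (n * (1 + c / n)) by (field; lra).
    rewrite ln_mult; [ring|lra|]. pose proof (Rdiv_lt_0_compat c n). lra. }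
  rewrite Hd. assert (Hv : 0 < c / n) by (apply Rdiv_lt_0_compat; lra).
  destruct (ln1p_bounds (c / n) ltac:(lra)) as [H1 H2].
  set (d := ln (1 + c / n)) in *.
  assert (E1 : c / n / (1 + c / n) = c / (c + n)) by (field; lra).
  rewrite E1 in H1.
  assert (E2 : (c + n) * (c / (c + n)) = c) by (field; lra).
  assert (E3 : (c + n) * (c / n) = c + c^2 / n) by (field; lra).
  assert (0 < c / (c + n)) by (apply Rdiv_lt_0_compat; lra).
  split; [lra|]. split.
  - rewrite <- E2 at 1. apply Rmult_le_compat_l; lra.
  - rewrite <- E3. apply Rmult_le_compat_l; lra.
Qed.

Definition target n := 4 * n * ln 2 ^ 2 + 8 * n * ln 2 * ln n - 8 * n * ln 2.

Lemma Kt_pair x n : 0 < x < 1/2 -> 1 <= n ->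
  Rabs (Kt (x + n) + Kt (1/2 - x + n) - target n) <= 3 / n.
Proof.
  intros Hx Hn.
  destruct (delta_bounds x n ltac:(lra) Hn) as [[A1 A2] [A3 A4]].
  destruct (delta_bounds (1/2 - x) n ltac:(lra) Hn) as [[B1 B2] [B3 B4]].
  set (d1 := ln (x + n) - ln n) in *. set (d2 := ln (1/2 - x + n) - ln n) in *.
  assert (E : Kt (x + n) + Kt (1/2 - x + n) - target n =
    4 * ln 2 * (((x + n) * d1 - x) + ((1/2 - x + n) * d2 - (1/2 - x))) - ln 2 * (d1 + d2)).
  { unfold Kt, target. replace (ln (x + n)) with (ln n + d1) by (unfold d1; ring).
    replace (ln (1/2 - x + n)) with (ln n + d2) by (unfold d2; ring). field. }
  rewrite E. pose proof ln2_bounds.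
  assert (x^2 / n <= 1/4 / n) by (unfold Rdiv; apply Rmult_le_compat_r; [left; apply Rinv_0_lt_compat; lra| nra]).
  assert ((1/2 - x)^2 / n <= 1/4 / n) by (unfold Rdiv; apply Rmult_le_compat_r; [left; apply Rinv_0_lt_compat; lra| nra]).
  assert (E4 : x / n + (1/2 - x) / n = 1/2 / n) by (field; lra).
  assert (0 < / n) by (apply Rinv_0_lt_compat; lra).
  assert (E5 : 3 / n = 3 * / n) by reflexivity.
  assert (E6 : 1/4 / n = 1/4 * / n) by (unfold Rdiv; ring).
  assert (E7 : 1/2 / n = 1/2 * / n) by (unfold Rdiv; ring).
  rewrite E6 in *. rewrite E7 in E4. rewrite E5.
  set (w := / n) in *.
  set (p := (x + n) * d1 - x). set (q := (1 / 2 - x + n) * d2 - (1 / 2 - x)).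
  assert (0 <= p <= 1/4 * w) by (unfold p; lra).
  assert (0 <= q <= 1/4 * w) by (unfold q; lra).
  apply Rabs_le. split; nra.
Qed.

Fixpoint sq (y : R) (N : nat) : R :=
  match N with O => 0 | S n => sq y n + ln (y + INR n) ^ 2 end.
Fixpoint lsum (y : R) (N : nat) : R :=
  match N with O => 0 | S n => lsum y n + ln (y + INR n) end.

Lemma sq_S y n : sq y (S n) = sq y n + ln (y + INR n) ^ 2.
Proof. reflexivity. Qed.
Lemma lsum_S y n : lsum y (S n) = lsum y n + ln (y + INR n).
Proof. reflexivity. Qed.

Lemma Z_iter y N : 0 < y -> Z y = sq y N + Z (y + INR N).
Proof.
  intros Hy. induction N as [|n IH].
  - simpl. rewrite Rplus_0_r. ring.
  - rewrite IH. rewrite sq_S. rewrite (Z_shift (y + INR n)) by (pose proof (pos_INR n); lra).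
    rewrite S_INR. replace (y + INR n + 1) with (y + (INR n + 1)) by ring. ring.
Qed.

Lemma pair_sum c N : 0 < c ->
  sq c N + sq (c + 1/2) N - sq (2 * c) (2 * N) = 2 * INR N * ln 2 ^ 2 - 2 * ln 2 * lsum (2 * c) (2 * N).
Proof.
  intros Hc. induction N as [|n IH].
  - simpl. ring.
  - replace (2 * S n)%nat with (S (S (2 * n))) by lia. rewrite !sq_S, !lsum_S.
    pose proof (pos_INR n).
    assert (E1 : ln (2 * c + INR (2 * n)) = ln 2 + ln (c + INR n)).
    { rewrite <- ln_mult by lra. f_equal. rewrite mult_INR. simpl. ring. }
    assert (E2 : ln (2 * c + INR (S (2 * n))) = ln 2 + ln (c + 1/2 + INR n)).
    { rewrite <- ln_mult by lra. f_equal. rewrite S_INR, mult_INR. simpl. field. }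
    rewrite E1, E2, S_INR.
    replace (sq (2*c) (2*n)) with (sq c n + sq (c + 1/2) n - 2 * INR n * ln 2 ^ 2 + 2 * ln 2 * lsum (2 * c) (2 * n)) by lra.
    ring.
Qed.

Lemma lsum_dup N : lsum (1/4) N + lsum (3/4) N = lsum (1/2) (2 * N) - 2 * INR N * ln 2.
Proof.
  induction N as [|n IH].
  - simpl. ring.
  - replace (2 * S n)%nat with (S (S (2 * n))) by lia. rewrite !lsum_S.
    pose proof (pos_INR n).
    assert (E1 : ln (1/2 + INR (2 * n)) = ln 2 + ln (1/4 + INR n)).
    { rewrite <- ln_mult by lra. f_equal. rewrite mult_INR. simpl. field. }
    assert (E2 : ln (1/2 + INR (S (2 * n))) = ln 2 + ln (3/4 + INR n)).
    { rewrite <- ln_mult by lra. f_equal. rewrite S_INR, mult_INR. simpl. field. }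
    rewrite E1, E2, S_INR.
    replace (lsum (1/2) (2*n)) with (lsum (1/4) n + lsum (3/4) n + 2 * INR n * ln 2) by lra.
    ring.
Qed.

Definition Tval x := Z (x + 1/2) + Z (1/2 - x) - Z (2 * x) - Z (1 - 2 * x) + Z x + Z (1 - x).
Definition Dm a M := lsum a M + lsum (1 - a) M - 2 * INR M * ln (INR M) + 2 * INR M.

Lemma T_decomp x N : 0 < x < 1/2 -> (1 <= N)%nat ->
  Tval x + 2 * ln 2 * Dm (2 * x) (2 * N) = KZ (x + INR N) + KZ (1/2 - x + INR N) - target (INR N).
Proof.
  intros Hx HN.
  assert (HNp : 1 <= INR N) by (apply (le_INR 1); lia).
  assert (E2N : INR (2 * N) = 2 * INR N) by (rewrite mult_INR; simpl; ring).
  unfold Tval, Dm, KZ, target.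
  rewrite (Z_iter x N), (Z_iter (x + 1/2) N), (Z_iter (2 * x) (2 * N)) by lra.
  rewrite (Z_iter (1/2 - x) N) by lra.
  replace (1 - x) with (1/2 - x + 1/2) by field.
  rewrite (Z_iter (1/2 - x + 1/2) N) by lra.
  replace (1 - 2 * x) with (2 * (1/2 - x)) by field.
  rewrite (Z_iter (2 * (1/2 - x)) (2 * N)) by lra.
  pose proof (pair_sum x N ltac:(lra)) as P1.
  pose proof (pair_sum (1/2 - x) N ltac:(lra)) as P2.
  rewrite !E2N.
  rewrite ln_mult by lra.
  replace (x + 1 / 2 + INR N) with (x + INR N + 1/2) by ring.
  replace (2 * x + 2 * INR N) with (2 * (x + INR N)) by ring.
  replace (1 / 2 - x + 1 / 2 + INR N) with (1/2 - x + INR N + 1/2) by ring.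
  replace (2 * (1 / 2 - x) + 2 * INR N) with (2 * (1/2 - x + INR N)) by ring.
  replace (1 - 2 * x) with (2 * (1/2 - x)) by field.
  lra.
Qed.

Lemma R34_ev c : 0 < c -> eventually (fun N : nat => 1 <= INR N /\ Rpower (INR N) (-(3/4)) < c).
Proof.
  intros Hc. destruct (Rpower_small (-(3/4)) c ltac:(lra) Hc) as [M [HM0 HM]].
  pose proof (is_lim_seq_INR) as HI. apply is_lim_seq_spec in HI.
  destruct (HI (Rmax M 1)) as [N0 HN0].
  exists N0. intros n Hn. specialize (HN0 n Hn).
  pose proof (Rmax_l M 1). pose proof (Rmax_r M 1).
  split; [lra|]. apply HM; lra.
Qed.

Lemma eps_bound x N : 0 < x < 1/2 -> 1 <= INR N ->
  Rabs (KZ (x + INR N) + KZ (1/2 - x + INR N) - target (INR N)) <= 35 * Rpower (INR N) (-(3/4)).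
Proof.
  intros Hx HN.
  pose proof (KZ_near (x + INR N) ltac:(lra)) as H1.
  pose proof (KZ_near (1/2 - x + INR N) ltac:(lra)) as H2.
  pose proof (Kt_pair x (INR N) Hx HN) as H3.
  pose proof (Rpower_neg_mono (INR N) (x + INR N) (3/4) ltac:(lra) ltac:(lra)).
  pose proof (Rpower_neg_mono (INR N) (1/2 - x + INR N) (3/4) ltac:(lra) ltac:(lra)).
  pose proof (inv_le_R34 (INR N) HN). 
  assert (3 / INR N = 3 * / INR N) by reflexivity.
  apply abs_split in H1. apply abs_split in H2. apply abs_split in H3.
  apply Rabs_le. lra.
Qed.

Lemma D_lim x : 0 < x < 1/2 ->
  is_lim_seq (fun N => Dm (2 * x) (2 * N)) (- Tval x / (2 * ln 2)).
Proof.
  intros Hx. pose proof ln2_bounds as Hl.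
  apply is_lim_seq_spec. intros eps.
  destruct (R34_ev (eps * (2 * ln 2) / 35)) as [N0 HN0].
  { apply Rdiv_lt_0_compat; [|lra]. apply Rmult_lt_0_compat; [apply cond_pos|lra]. }
  exists N0. intros n Hn. destruct (HN0 n Hn) as [Hn1 Hn2].
  assert (Hn1' : (1 <= n)%nat) by (apply INR_le; simpl; lra).
  pose proof (T_decomp x n Hx Hn1') as E.
  pose proof (eps_bound x n Hx Hn1) as B.
  set (e := KZ (x + INR n) + KZ (1 / 2 - x + INR n) - target (INR n)) in *.
  assert (E2 : Dm (2 * x) (2 * n) - - Tval x / (2 * ln 2) = e / (2 * ln 2)).
  { apply Rmult_eq_reg_r with (2 * ln 2); [|lra]. field_simplify; [|lra..]. lra. }
  rewrite E2. unfold Rdiv. rewrite Rabs_mult, (Rabs_right (/ (2 * ln 2))) by (left; apply Rinv_0_lt_compat; lra).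
  apply Rmult_lt_reg_r with (2 * ln 2); [lra|].
  rewrite Rmult_assoc, Rinv_l, Rmult_1_r by lra.
  pose proof (cond_pos eps).
  assert (35 * Rpower (INR n) (-(3/4)) < eps * (2 * ln 2)).
  { apply Rmult_lt_compat_l with (r := 35) in Hn2; [|lra].
    replace (35 * (eps * (2 * ln 2) / 35)) with (eps * (2 * ln 2)) in Hn2 by field. exact Hn2. }
  lra.
Qed.

Definition cw z n := fun t => cos (2 * z * t) * cos t ^ n.
Definition Ic n z := RInt (cw z n) 0 (PI / 2).

Lemma cw_cont z n t : continuous (cw z n) t.
Proof. apply (ex_derive_continuous (cw z n)). unfold cw. auto_derive. auto. Qed.

Lemma cw_ex z n a b : ex_RInt (cw z n) a b.
Proof. apply (ex_RInt_continuous (V:=R_CompleteNormedModule) (cw z n)). intros; apply cw_cont. Qed.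

Definition Hrec z n t := -2 * z * sin (2 * z * t) * cos t ^ (S (S n)) + (INR n + 2) * cos (2 * z * t) * cos t ^ (S n) * sin t.

Lemma Hrec_deriv z n t : is_derive (Hrec z n) t
  (((INR n + 2)^2 - 4 * z^2) * cw z (S (S n)) t - (INR n + 2) * (INR n + 1) * cw z n t).
Proof.
  unfold Hrec, cw. auto_derive; auto.
  change (match n with | 0%nat => 1 | S _ => INR n + 1 end) with (INR (S n)). rewrite S_INR.
  change (cos t ^ S (S n)) with (cos t * (cos t * cos t ^ n)).
  apply Rminus_diag_uniq.
  match goal with |- ?A - ?B = 0 =>
    replace (A - B) with (- cos (2 * z * t) * (INR n + 2) * (INR n + 1) * cos t ^ n * (Rsqr (sin t) + Rsqr (cos t) - 1)) by (unfold Rsqr; ring) end.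
  rewrite sin2_cos2. ring.
Qed.

Lemma Ic_lin (f : R -> R) A B n m z l :
  is_RInt (fun t => A * cw z n t - B * cw z m t) 0 (PI/2) l ->
  l = A * Ic n z - B * Ic m z.
Proof.
  intros H.
  assert (H1 := RInt_correct (V:=R_CompleteNormedModule) (cw z n) 0 (PI/2) (cw_ex z n 0 (PI/2))).
  assert (H2 := RInt_correct (V:=R_CompleteNormedModule) (cw z m) 0 (PI/2) (cw_ex z m 0 (PI/2))).
  apply (is_RInt_scal (V:=R_NormedModule) _ _ _ A) in H1.
  apply (is_RInt_scal (V:=R_NormedModule) _ _ _ B) in H2.
  pose proof (is_RInt_minus (V:=R_NormedModule) _ _ _ _ _ _ H1 H2) as H3.
  rewrite <- (is_RInt_unique _ _ _ _ H). apply is_RInt_unique. exact H3.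
Qed.

Lemma Ic_rec n z : ((INR n + 2)^2 - 4 * z^2) * Ic (S (S n)) z = (INR n + 2) * (INR n + 1) * Ic n z.
Proof.
  assert (H := is_RInt_derive (V:=R_CompleteNormedModule) (Hrec z n)
    (fun t => ((INR n + 2)^2 - 4 * z^2) * cw z (S (S n)) t - (INR n + 2) * (INR n + 1) * cw z n t)
    0 (PI/2) (fun t _ => Hrec_deriv z n t)).
  assert (Hc : forall x, Rmin 0 (PI/2) <= x <= Rmax 0 (PI/2) ->
     continuous (fun t => ((INR n + 2)^2 - 4 * z^2) * cw z (S (S n)) t - (INR n + 2) * (INR n + 1) * cw z n t) x).
  { intros x _. apply (ex_derive_continuous (fun t => ((INR n + 2)^2 - 4 * z^2) * cw z (S (S n)) t - (INR n + 2) * (INR n + 1) * cw z n t)).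
    unfold cw. auto_derive. auto. }
  specialize (H Hc).
  apply Ic_lin in H; [|exact (fun x => x)].
  assert (E1 : Hrec z n (PI/2) = 0).
  { unfold Hrec. rewrite cos_PI2. simpl. ring. }
  assert (E2 : Hrec z n 0 = 0).
  { unfold Hrec. rewrite Rmult_0_r, sin_0. ring. }
  change (minus (Hrec z n (PI / 2)) (Hrec z n 0)) with (Hrec z n (PI / 2) - Hrec z n 0) in H.
  rewrite E1, E2 in H. lra.
Qed.

Lemma Ic1 z : (1 - 4 * z^2) * Ic 1 z = cos (PI * z).
Proof.
  set (H1 := fun t => sin t * cos (2 * z * t) - 2 * z * cos t * sin (2 * z * t)).
  assert (H := is_RInt_derive (V:=R_CompleteNormedModule) H1
    (fun t => (1 - 4 * z^2) * cw z 1 t - 0 * cw z 0 t) 0 (PI/2)).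
  assert (Hd : forall x, Rmin 0 (PI/2) <= x <= Rmax 0 (PI/2) ->
     is_derive H1 x ((1 - 4 * z^2) * cw z 1 x - 0 * cw z 0 x)).
  { intros x _. unfold H1, cw. auto_derive; auto. simpl. ring. }
  assert (Hc : forall x, Rmin 0 (PI/2) <= x <= Rmax 0 (PI/2) ->
     continuous (fun t => (1 - 4 * z^2) * cw z 1 t - 0 * cw z 0 t) x).
  { intros x _. apply (ex_derive_continuous (fun t => (1 - 4 * z^2) * cw z 1 t - 0 * cw z 0 t)).
    unfold cw. auto_derive. auto. }
  specialize (H Hd Hc). apply Ic_lin in H; [|exact (fun x => x)].
  change (minus (H1 (PI / 2)) (H1 0)) with (H1 (PI / 2) - H1 0) in H.
  unfold H1 in H. rewrite sin_PI2, cos_PI2, !Rmult_0_r, sin_0, cos_0 in H.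
  replace (2 * z * (PI / 2)) with (PI * z) in H by field. lra.
Qed.

Lemma abs_sin_le y : Rabs (sin y) <= Rabs y.
Proof.
  destruct (Rtotal_order y 0) as [H|[H|H]].
  - pose proof (sin_lt_x (- y) ltac:(lra)). rewrite sin_neg in H0.
    assert (sin y <= 0 \/ 0 < sin y) as [H1|H1] by lra.
    + rewrite Rabs_left1, Rabs_left by lra. lra.
    +
      rewrite Rabs_right, Rabs_left by lra.
      pose proof (sin_lt_x (sin y) H1).
      pose proof (SIN_bound y). 
      destruct (Rlt_le_dec (- PI) y).
      * assert (sin y < 0) by (apply sin_lt_0_var; lra). lra.
      * pose proof PI2_1. lra.
  - subst. rewrite sin_0, Rabs_R0. lra.
  - pose proof (sin_lt_x y H).
    assert (sin y <= 0 \/ 0 < sin y) as [H1|H1] by lra.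
    + rewrite Rabs_left1, Rabs_right by lra.
      destruct (Rle_lt_dec y PI).
      * assert (0 <= sin y) by (apply sin_ge_0; lra). lra.
      * pose proof (SIN_bound y). pose proof PI2_1. lra.
    + rewrite !Rabs_right by lra. lra.
Qed.

Lemma one_minus_cos w : 0 <= 1 - cos w <= w^2 / 2.
Proof.
  pose proof (cos_2a_sin (w/2)) as H. replace (2 * (w/2)) with w in H by field.
  pose proof (abs_sin_le (w/2)).
  assert (sin (w/2) * sin (w/2) <= (w/2) * (w/2)).
  { apply Rsqr_le_abs_1 in H0. unfold Rsqr in H0. exact H0. }
  assert (0 <= sin (w/2) * sin (w/2)) by nra.
  split; nra.
Qed.

Lemma tcos_le_sin t : 0 <= t <= PI / 2 -> t * cos t <= sin t.
Proof.
  intros Ht.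
  assert (H := is_RInt_derive (V:=R_CompleteNormedModule) (fun s => sin s - s * cos s) (fun s => s * sin s) 0 t).
  assert (Hd : forall x, Rmin 0 t <= x <= Rmax 0 t -> is_derive (fun s => sin s - s * cos s) x (x * sin x)).
  { intros x _. auto_derive; auto. ring. }
  assert (Hc : forall x, Rmin 0 t <= x <= Rmax 0 t -> continuous (fun s => s * sin s) x).
  { intros x _. apply (ex_derive_continuous (fun s => s * sin s)). auto_derive. auto. }
  specialize (H Hd Hc).
  assert (Hge : 0 <= RInt (fun s => s * sin s) 0 t).
  { apply RInt_ge_0; [lra| eexists; exact H|]. intros x Hx.
    assert (0 <= sin x) by (apply sin_ge_0; pose proof PI2_Rlt_PI; lra). nra. }
  rewrite (is_RInt_unique _ _ _ _ H) in Hge.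
  change (minus (sin t - t * cos t) (sin 0 - 0 * cos 0)) with ((sin t - t * cos t) - (sin 0 - 0 * cos 0)) in Hge.
  rewrite sin_0 in Hge. lra.
Qed.

Lemma RInt_lin2 (f g : R -> R) a b A B : ex_RInt f a b -> ex_RInt g a b ->
  RInt (fun t => A * f t - B * g t) a b = A * RInt f a b - B * RInt g a b.
Proof.
  intros Hf Hg.
  apply (RInt_correct (V:=R_CompleteNormedModule)) in Hf.
  apply (RInt_correct (V:=R_CompleteNormedModule)) in Hg.
  apply (is_RInt_scal (V:=R_NormedModule) _ _ _ A) in Hf.
  apply (is_RInt_scal (V:=R_NormedModule) _ _ _ B) in Hg.
  pose proof (is_RInt_minus (V:=R_NormedModule) _ _ _ _ _ _ Hf Hg) as H3.
  apply is_RInt_unique. exact H3.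
Qed.

Lemma ex_lin2 (f g : R -> R) a b A B : ex_RInt f a b -> ex_RInt g a b ->
  ex_RInt (fun t => A * f t - B * g t) a b.
Proof.
  intros Hf Hg.
  apply (RInt_correct (V:=R_CompleteNormedModule)) in Hf.
  apply (RInt_correct (V:=R_CompleteNormedModule)) in Hg.
  apply (is_RInt_scal (V:=R_NormedModule) _ _ _ A) in Hf.
  apply (is_RInt_scal (V:=R_NormedModule) _ _ _ B) in Hg.
  eexists. exact (is_RInt_minus (V:=R_NormedModule) _ _ _ _ _ _ Hf Hg).
Qed.

Lemma Ic_bound n z :
  0 <= Ic (S (S n)) 0 - Ic (S (S n)) z <= 2 * z^2 * (Ic n 0 - Ic (S (S n)) 0).
Proof.
  pose proof PI2_RGT_0.
  assert (Hp : forall t, 0 < t < PI/2 -> 0 <= cos t /\ 0 <= t * cos t <= sin t).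
  { intros t Ht. assert (0 <= cos t) by (apply cos_ge_0; lra).
    split; [auto|]. split; [nra|]. apply tcos_le_sin; lra. }
  assert (E1 : Ic (S (S n)) 0 - Ic (S (S n)) z = RInt (fun t => 1 * cw 0 (S (S n)) t - 1 * cw z (S (S n)) t) 0 (PI/2)).
  { rewrite RInt_lin2 by apply cw_ex. unfold Ic. ring. }
  assert (E2 : 2 * z^2 * (Ic n 0 - Ic (S (S n)) 0) = RInt (fun t => 2 * z^2 * cw 0 n t - 2 * z^2 * cw 0 (S (S n)) t) 0 (PI/2)).
  { rewrite RInt_lin2 by apply cw_ex. unfold Ic. ring. }
  rewrite E1, E2. split.
  - apply RInt_ge_0; [lra| apply ex_lin2; apply cw_ex |].
    intros t Ht. destruct (Hp t Ht) as [Hc _]. unfold cw.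
    replace (2 * 0 * t) with 0 by ring. rewrite cos_0.
    pose proof (one_minus_cos (2 * z * t)). assert (0 <= cos t ^ S (S n)) by (apply pow_le; lra).
    nra.
  - apply RInt_le; [lra| apply ex_lin2; apply cw_ex | apply ex_lin2; apply cw_ex |].
    intros t Ht. destruct (Hp t Ht) as [Hc [Ht1 Ht2]]. unfold cw.
    replace (2 * 0 * t) with 0 by ring. rewrite cos_0.
    change (cos t ^ S (S n)) with (cos t * (cos t * cos t ^ n)).
    pose proof (one_minus_cos (2 * z * t)). assert (0 <= cos t ^ n) by (apply pow_le; lra).
    pose proof (sin2_cos2 t). unfold Rsqr in H2.
    assert (t * cos t * (t * cos t) <= sin t * sin t) by nra.
    set (cn := cos t ^ n) in *.
    assert ((1 - cos (2 * z * t)) * (cos t * (cos t * cn)) <= (2 * z * t)^2 / 2 * (cos t * (cos t * cn))).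
    { apply Rmult_le_compat_r; [|lra]. apply Rmult_le_pos; [lra|]. apply Rmult_le_pos; lra. }
    assert ((2 * z * t)^2 / 2 * (cos t * (cos t * cn)) = 2 * z^2 * cn * (t * cos t * (t * cos t))) by field.
    assert (2 * z^2 * cn * (t * cos t * (t * cos t)) <= 2 * z^2 * cn * (sin t * sin t)).
    { apply Rmult_le_compat_l; [|lra]. apply Rmult_le_pos; [nra|lra]. }
    assert (sin t * sin t = 1 - cos t * cos t) by lra.
    rewrite H7 in H6. lra.
Qed.

Lemma Ic0_1 : Ic 1 0 = 1.
Proof. pose proof (Ic1 0). rewrite Rmult_0_r, cos_0 in H. lra. Qed.

Lemma Ic0_rec n : Ic (S (S n)) 0 = (INR n + 1) / (INR n + 2) * Ic n 0.
Proof.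
  pose proof (Ic_rec n 0). pose proof (pos_INR n).
  apply Rmult_eq_reg_l with ((INR n + 2)^2); [|nra].
  replace ((INR n + 2) ^ 2 * ((INR n + 1) / (INR n + 2) * Ic n 0))
    with ((INR n + 2) * (INR n + 1) * Ic n 0) by (field; lra).
  rewrite <- H. ring.
Qed.

Lemma Ic0_pos m : 0 < Ic (2 * m + 1) 0.
Proof.
  induction m as [|m IH].
  - simpl. rewrite Ic0_1. lra.
  - replace (2 * S m + 1)%nat with (S (S (2 * m + 1))) by lia.
    rewrite Ic0_rec. pose proof (pos_INR (2 * m + 1)).
    apply Rmult_lt_0_compat; [apply Rdiv_lt_0_compat; lra| exact IH].
Qed.

Fixpoint prodc (z : R) (m : nat) : R :=
  match m with O => 1 | S j => prodc z j * (1 - z^2 / (INR j + 1/2)^2) end.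

Lemma prod_inv m z : prodc z (S m) * Ic (2 * m + 1) z = cos (PI * z) * Ic (2 * m + 1) 0.
Proof.
  induction m as [|m IH].
  - simpl. rewrite Ic0_1. rewrite <- Ic1. field.
  - replace (2 * S m + 1)%nat with (S (S (2 * m + 1))) by lia.
    change (prodc z (S (S m))) with (prodc z (S m) * (1 - z^2 / (INR (S m) + 1/2)^2)).
    pose proof (Ic_rec (2 * m + 1) z) as R. rewrite Ic0_rec.
    assert (EI : INR (2 * m + 1) = 2 * INR m + 1) by (rewrite plus_INR, mult_INR; simpl; ring).
    rewrite EI in *. rewrite S_INR. pose proof (pos_INR m).
    set (M := INR m) in *.
    set (p := prodc z (S m)) in *. set (I1 := Ic (2 * m + 1) z) in *.
    set (I3 := Ic (S (S (2 * m + 1))) z) in *. set (J1 := Ic (2 * m + 1) 0) in *.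
    assert (Eq : 1 - z^2 / (M + 1 + 1/2)^2 = ((2 * M + 1 + 2)^2 - 4 * z^2) / (2 * M + 3)^2) by (field; lra).
    rewrite Eq.
    replace (p * (((2 * M + 1 + 2) ^ 2 - 4 * z ^ 2) / (2 * M + 3) ^ 2) * I3)
      with (p * (((2 * M + 1 + 2) ^ 2 - 4 * z ^ 2) * I3) / (2 * M + 3) ^ 2) by (field; lra).
    rewrite R.
    replace (p * ((2 * M + 1 + 2) * (2 * M + 1 + 1) * I1) / (2 * M + 3) ^ 2)
      with ((p * I1) * ((2 * M + 1 + 2) * (2 * M + 1 + 1)) / (2 * M + 3) ^ 2) by (field; lra).
    rewrite IH. field. lra.
Qed.

Lemma ratio_bound k z : z^2 < 1/4 ->
  0 <= Ic (2 * S k + 1) 0 - Ic (2 * S k + 1) z <= z^2 / (INR k + 1) * Ic (2 * S k + 1) 0.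
Proof.
  intros Hz. replace (2 * S k + 1)%nat with (S (S (2 * k + 1))) by lia.
  pose proof (Ic_bound (2 * k + 1) z) as [B1 B2].
  split; [exact B1|].
  rewrite Ic0_rec in *.
  assert (EI : INR (2 * k + 1) = 2 * INR k + 1) by (rewrite plus_INR, mult_INR; simpl; ring).
  rewrite EI in *. pose proof (pos_INR k).
  replace (2 * z ^ 2 * (Ic (2 * k + 1) 0 - (2 * INR k + 1 + 1) / (2 * INR k + 1 + 2) * Ic (2 * k + 1) 0))
    with (z ^ 2 / (INR k + 1) * ((2 * INR k + 1 + 1) / (2 * INR k + 1 + 2) * Ic (2 * k + 1) 0)) in B2 by (field; lra).
  exact B2.
Qed.

Lemma prodc_lim z : z^2 < 1/4 -> is_lim_seq (prodc z) (cos (PI * z)).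
Proof.
  intros Hz.
  set (r := fun k => Ic (2 * S k + 1) z / Ic (2 * S k + 1) 0).
  assert (Hr : forall k, 0 <= 1 - r k <= z^2 / (INR k + 1)).
  { intros k. destruct (ratio_bound k z Hz) as [B1 B2]. pose proof (Ic0_pos (S k)) as P.
    pose proof (pos_INR k). unfold r.
    replace (1 - Ic (2 * S k + 1) z / Ic (2 * S k + 1) 0)
      with ((Ic (2 * S k + 1) 0 - Ic (2 * S k + 1) z) / Ic (2 * S k + 1) 0) by (field; lra).
    split; [apply Rdiv_le_0_compat; lra|].
    apply Rmult_le_reg_r with (Ic (2 * S k + 1) 0); [lra|].
    unfold Rdiv at 1. rewrite Rmult_assoc, Rinv_l, Rmult_1_r by lra. exact B2. }
  assert (Hrl : is_lim_seq r 1).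
  { apply is_lim_seq_spec. intros eps.
    pose proof (is_lim_seq_INR) as HI. apply is_lim_seq_spec in HI.
    destruct (HI (z^2 / eps)) as [N0 HN0]. exists N0. intros n Hn. specialize (HN0 n Hn).
    specialize (Hr n). pose proof (cond_pos eps). pose proof (pos_INR n).
    assert (z^2 / (INR n + 1) < eps).
    { apply Rmult_lt_reg_r with (INR n + 1); [lra|].
      unfold Rdiv. rewrite Rmult_assoc, Rinv_l, Rmult_1_r by lra.
      assert (z^2 < eps * INR n).
      { apply Rmult_lt_reg_r with (/ eps); [apply Rinv_0_lt_compat; lra|].
        replace (eps * INR n * / eps) with (INR n) by (field; lra). exact HN0. }
      nra. }
    rewrite Rabs_left1 by lra. lra. }
  assert (Hp : forall k, prodc z (k + 2) = cos (PI * z) / r k).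
  { intros k. replace (k + 2)%nat with (S (S k)) by lia.
    pose proof (prod_inv (S k) z) as E. pose proof (Ic0_pos (S k)).
    specialize (Hr k). pose proof (pos_INR k).
    assert (z^2 / (INR k + 1) <= z^2) by (apply Rmult_le_reg_r with (INR k + 1); [lra|]; unfold Rdiv; rewrite Rmult_assoc, Rinv_l by lra; nra).
    assert (0 < r k) by lra.
    unfold r in *. assert (0 < Ic (2 * S k + 1) z).
    { apply Rmult_lt_reg_r with (/ Ic (2 * S k + 1) 0); [apply Rinv_0_lt_compat; lra|]. lra. }
    field_simplify; [|lra..]. 
    apply Rmult_eq_reg_r with (Ic (2 * S k + 1) z); [|lra].
    field_simplify; [|lra]. rewrite E. ring. }
  apply (is_lim_seq_incr_n _ 2).
  apply (is_lim_seq_ext (fun k => cos (PI * z) / r k)); [intros; symmetry; apply Hp|].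
  assert (Hl := is_lim_seq_div' _ _ _ _ (is_lim_seq_const (cos (PI * z))) Hrl ltac:(lra)).
  replace (cos (PI * z) / 1) with (cos (PI * z)) in Hl by field. exact Hl.
Qed.

Lemma prodc_S z j : prodc z (S j) = prodc z j * (1 - z^2 / (INR j + 1/2)^2).
Proof. reflexivity. Qed.

Lemma factor_pos z j : z^2 < 1/4 -> 0 < 1 - z^2 / (INR j + 1/2)^2.
Proof.
  intros Hz. pose proof (pos_INR j).
  assert (1/4 <= (INR j + 1/2)^2) by nra.
  assert (z^2 / (INR j + 1/2)^2 < 1).
  { apply Rmult_lt_reg_r with ((INR j + 1/2)^2); [nra|].
    unfold Rdiv. rewrite Rmult_assoc, Rinv_l, Rmult_1_r by nra. lra. }
  lra.
Qed.

Lemma prodc_pos z m : z^2 < 1/4 -> 0 < prodc z m.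
Proof.
  intros Hz. induction m as [|m IH]; simpl; [lra|].
  apply Rmult_lt_0_compat; [exact IH| apply factor_pos; exact Hz].
Qed.

Lemma lsum_prod a M : 0 < a < 1 ->
  lsum a M + lsum (1 - a) M - 2 * lsum (1/2) M = ln (prodc (a - 1/2) M).
Proof.
  intros Ha. assert (Hz : (a - 1/2)^2 < 1/4) by nra.
  induction M as [|m IH].
  - simpl. rewrite ln_1. ring.
  - rewrite !lsum_S, prodc_S.
    rewrite ln_mult by (apply prodc_pos || apply factor_pos; exact Hz).
    rewrite <- IH. pose proof (pos_INR m).
    assert (E : 1 - (a - 1/2)^2 / (INR m + 1/2)^2 = (a + INR m) * (1 - a + INR m) / ((1/2 + INR m) * (1/2 + INR m))).
    { field. lra. }
    rewrite E. unfold Rdiv. rewrite ln_mult, ln_mult, ln_Rinv, ln_mult by (try apply Rinv_0_lt_compat; try apply Rmult_lt_0_compat; lra).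
    ring.
Qed.

Lemma cosprod_lim a : 0 < a < 1 ->
  is_lim_seq (fun M => lsum a M + lsum (1 - a) M - 2 * lsum (1/2) M) (ln (sin (PI * a))).
Proof.
  intros Ha. assert (Hz : (a - 1/2)^2 < 1/4) by nra.
  apply (is_lim_seq_ext (fun M => ln (prodc (a - 1/2) M))); [intros; symmetry; apply lsum_prod; exact Ha|].
  assert (E : cos (PI * (a - 1/2)) = sin (PI * a)).
  { replace (PI * (a - 1/2)) with (- (PI / 2 - PI * a)) by field. rewrite cos_neg, cos_shift. reflexivity. }
  assert (Hs : 0 < sin (PI * a)).
  { apply sin_gt_0; [apply Rmult_lt_0_compat; [apply PI_RGT_0|lra]|].
    pose proof PI_RGT_0. nra. }
  rewrite <- E. apply (is_lim_seq_continuous ln).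
  - apply continuity_pt_filterlim. apply continuous_ln. lra.
  - apply prodc_lim. exact Hz.
Qed.

Lemma lim_uniq (u : nat -> R) (l1 l2 : R) : is_lim_seq u l1 -> is_lim_seq u l2 -> l1 = l2.
Proof.
  intros H1 H2. apply is_lim_seq_unique in H1. apply is_lim_seq_unique in H2.
  rewrite H1 in H2. inversion H2. reflexivity.
Qed.

Lemma ev_double : filterlim (fun n => (2 * n)%nat) eventually eventually.
Proof.
  intros P [N0 HN0]. exists N0. intros n Hn. apply HN0. lia.
Qed.

Definition Delta a := - Tval (a / 2) / (2 * ln 2).

Lemma D_lim' a : 0 < a < 1 -> is_lim_seq (fun N => Dm a (2 * N)) (Delta a).
Proof.
  intros Ha. pose proof (D_lim (a / 2) ltac:(lra)) as H.
  replace (2 * (a / 2)) with a in H by field. exact H.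
Qed.

Lemma Delta_diff a : 0 < a < 1 -> Delta a - Delta (1/2) = ln (sin (PI * a)).
Proof.
  intros Ha.
  pose proof (is_lim_seq_minus' _ _ _ _ (D_lim' a Ha) (D_lim' (1/2) ltac:(lra))) as H1.
  pose proof (is_lim_seq_subseq _ _ _ ev_double (cosprod_lim a Ha)) as H2.
  apply (lim_uniq (fun N => Dm a (2 * N) - Dm (1/2) (2 * N))); [exact H1|].
  eapply is_lim_seq_ext; [|exact H2]. intros n. simpl.
  unfold Dm. replace (1 - 1/2) with (1/2) by field. ring.
Qed.

Lemma Dm_dup N : Dm (1/4) N = 1/2 * Dm (1/2) (2 * N).
Proof.
  unfold Dm. replace (1 - 1/4) with (3/4) by field. replace (1 - 1/2) with (1/2) by field.
  rewrite lsum_dup. rewrite mult_INR. simpl (INR 2).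
  destruct N as [|n].
  - simpl. ring.
  - pose proof (pos_INR n). rewrite S_INR. rewrite ln_mult by lra. replace (1 + 1) with 2 by ring. field.
Qed.

Lemma Delta_half : Delta (1/2) = ln 2.
Proof.
  assert (H1 : Delta (1/4) = 1/2 * Delta (1/2)).
  { pose proof (D_lim' (1/4) ltac:(lra)) as A.
    pose proof (is_lim_seq_subseq _ _ _ ev_double (D_lim' (1/2) ltac:(lra))) as B.
    apply (is_lim_seq_scal_l _ (1/2)) in B. simpl in B.
    apply (lim_uniq (fun N => Dm (1/4) (2 * N))); [exact A|].
    eapply is_lim_seq_ext; [|exact B]. intros n. simpl. rewrite Dm_dup. reflexivity. }
  pose proof (Delta_diff (1/4) ltac:(lra)) as H2.
  replace (PI * (1/4)) with (PI / 4) in H2 by field. rewrite sin_PI4 in H2.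
  assert (Hs : ln (1 / sqrt 2) = - (ln 2 / 2)).
  { assert (0 < sqrt 2) by (apply sqrt_lt_R0; lra).
    unfold Rdiv at 1. rewrite Rmult_1_l, ln_Rinv by lra.
    assert (ln (sqrt 2) + ln (sqrt 2) = ln 2) by (rewrite <- ln_mult, sqrt_sqrt by lra; reflexivity).
    lra. }
  rewrite Hs in H2. lra.
Qed.

Lemma Tval_value x : 0 < x < 1/2 -> Tval x = - 2 * ln 2 * ln (2 * sin (2 * PI * x)).
Proof.
  intros Hx. pose proof (Delta_diff (2 * x) ltac:(lra)) as H. rewrite Delta_half in H.
  unfold Delta in H. replace (2 * x / 2) with x in H by field.
  pose proof ln2_bounds.
  assert (Hs : 0 < sin (PI * (2 * x))).
  { apply sin_gt_0; [apply Rmult_lt_0_compat; [apply PI_RGT_0|lra]|]. pose proof PI_RGT_0. nra. }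
  replace (2 * PI * x) with (PI * (2 * x)) by ring. rewrite ln_mult by lra.
  apply Rmult_eq_reg_r with (/ (2 * ln 2)); [|apply Rinv_neq_0_compat; lra].
  replace (Tval x * / (2 * ln 2)) with (Tval x / (2 * ln 2)) by reflexivity.
  replace (Tval x / (2 * ln 2)) with (- (ln 2 + ln (sin (PI * (2 * x))))) by lra.
  field. lra.
Qed.

Theorem mainTheorem7 (x : R) (hx0 : 0 < x) (hx1 : x < 1 / 2) :
  hurwitz_zeta2_at0 (x + 1 / 2) + hurwitz_zeta2_at0 (1 / 2 - x)
  = hurwitz_zeta2_at0 (2 * x) + hurwitz_zeta2_at0 (1 - 2 * x)
    - (hurwitz_zeta2_at0 x + hurwitz_zeta2_at0 (1 - x))
    - 2 * ln 2 * ln (2 * sin (2 * PI * x)).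
Proof.
  pose proof (Tval_value x (conj hx0 hx1)) as H. unfold Tval in H. lra.
Qed.
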